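(* Let $\alpha,\beta,\gamma,\lambda,x$ be non-negative integers with $(\alpha,\beta,\gamma,x)\neq(0,0,0,0)$. Then for every integer $n\ge0$, $$T_{n+1}^{\lambda,x}(\alpha,\beta,\gamma)=\gamma\,T_n^{\lambda,x}(\alpha,\beta,\gamma-\alpha)+x\lambda\beta\,T_n^{\lambda+1,x}(\alpha,\beta,\gamma+\beta-\alpha).$$
   Context: For complex numbers $c,\alpha$ and an integer $n\ge 0$ let $(c|\alpha)_n=\prod_{i=0}^{n-1}(c-i\alpha)$, with $(c|\alpha)_0=1$. Let $E_{\alpha,c}(t)=\sum_{n\ge 0}(c|\alpha)_n\,t^n/n!$, viewed as a formal power series in $t$. It equals $(1+\alpha t)^{c/\alpha}$ if $\alpha\neq0$ and $e^{ct}$ if $\alpha=0$. For complex $\alpha,\beta,\gamma,x$ and a non-negative integer $\lambda$, the numbers $T_n^{\lambda,x}(\alpha,\beta,\gamma)$, $n\ge0$, are defined by the formal power series identity $$\sum_{n\ge0}T_n^{\lambda,x}(\alpha,\beta,\gamma)\frac{t^n}{n!}=E_{\alpha,\gamma}(t)\,\bigl(1-x(E_{\alpha,\beta}(t)-1)\bigr)^{-\lambda}.$$ The third argument may be any complex number. *)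

(* Defs.v *)
(* Formal power series over algC (algebraic complex numbers),
   represented by their coefficient sequences nat -> algC (ordinary coefficients). *)
From HB Require Import structures.
From mathcomp Require Import all_boot all_order all_algebra all_field.
Set Implicit Arguments. Unset Strict Implicit. Unset Printing Implicit Defensive.
Import Order.TTheory GRing.Theory Num.Theory.
Local Open Scope ring_scope.

Definition fps := nat -> algC.

Definition fall (c alpha : algC) (n : nat) : algC :=
  \prod_(i < n) (c - i%:R * alpha).

Definition E_ser (alpha c : algC) : fps := fun n => fall c alpha n / (n`!)%:R.

Definition fps_one : fps := fun n => if n is 0 then 1 else 0.
Definition fps_add (f g : fps) : fps := fun n => f n + g n.
Definition fps_scale (a : algC) (f : fps) : fps := fun n => a * f n.
Definition fps_mul (f g : fps) : fps :=
  fun n => \sum_(i < n.+1) f i * g (n - i)%N.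
Definition fps_pow (f : fps) (k : nat) : fps := iter k (fps_mul f) fps_one.

Fixpoint inv_coefs (f : fps) (n : nat) : seq algC :=
  match n with
  | 0 => [:: (f 0%N)^-1]
  | m.+1 => let s := inv_coefs f m in
            rcons s (- (f 0%N)^-1 *
                     \sum_(i < m.+1) f i.+1 * nth 0 s (m - i)%N)
  end.
Definition fps_inv (f : fps) : fps := fun n => nth 0 (inv_coefs f n) n.

Definition T (n lam : nat) (x alpha beta gamma : algC) : algC :=
  let base := fps_add fps_one
                (fps_scale (- x) (fps_add (E_ser alpha beta) (fps_scale (-1) fps_one))) in
  (n`!)%:R * fps_mul (E_ser alpha gamma) (fps_pow (fps_inv base) lam) n.

(* Main.v *)
Require Import Defs.
From HB Require Import structures.
From mathcomp Require Import all_boot all_order all_algebra all_field.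
From mathcomp Require Import ring.
Import Order.TTheory GRing.Theory Num.Theory.
Local Open Scope ring_scope.

Definition eqN (N : nat) (p q : {poly algC}) := forall i, (i < N)%N -> p`_i = q`_i.

Lemma eqN_eq N p q : p = q -> eqN N p q. Proof. by move=> ->. Qed.
Lemma eqN_sym N p q : eqN N p q -> eqN N q p. Proof. by move=> h i /h ->. Qed.
Lemma eqN_trans N p q r : eqN N p q -> eqN N q r -> eqN N p r.
Proof. by move=> h1 h2 i hi; rewrite h1 // h2. Qed.
Lemma eqN_le N M p q : (M <= N)%N -> eqN N p q -> eqN M p q.
Proof. by move=> hMN h i hi; apply: h; apply: leq_trans hMN. Qed.
Lemma eqN_add N p q p' q' : eqN N p p' -> eqN N q q' -> eqN N (p + q) (p' + q').
Proof. by move=> h1 h2 i hi; rewrite !coefD h1 // h2. Qed.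
Lemma eqN_mul N p q p' q' : eqN N p p' -> eqN N q q' -> eqN N (p * q) (p' * q').
Proof.
move=> h1 h2 i hi; rewrite !coefM; apply: eq_bigr => j _.
have hj : (j <= i)%N by rewrite -ltnS.
rewrite h1 ?h2 //; first exact: leq_ltn_trans (leq_subr j i) hi.
exact: leq_ltn_trans hj hi.
Qed.
Lemma eqN_mulC N c p q : eqN N p q -> eqN N (c%:P * p) (c%:P * q).
Proof. by move=> h; apply: eqN_mul. Qed.
Lemma eqN_deriv N p q : eqN N.+1 p q -> eqN N p^`() q^`().
Proof. by move=> h i hi; rewrite !coef_deriv h. Qed.

Definition agree N (f : fps) (p : {poly algC}) := forall i, (i < N)%N -> f i = p`_i.

Lemma agree_mul N f g p q : agree N f p -> agree N g q -> agree N (fps_mul f g) (p * q).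
Proof.
move=> h1 h2 i hi; rewrite /fps_mul coefM; apply: eq_bigr => j _.
have hj : (j <= i)%N by rewrite -ltnS.
rewrite h1 ?h2 //; first exact: leq_ltn_trans (leq_subr j i) hi.
exact: leq_ltn_trans hj hi.
Qed.
Lemma agree_one N : agree N fps_one 1.
Proof. by move=> [|i] _; rewrite coef1. Qed.
Lemma agree_add N f g p q : agree N f p -> agree N g q -> agree N (fps_add f g) (p + q).
Proof. by move=> h1 h2 i hi; rewrite coefD -h1 // -h2. Qed.
Lemma agree_scale N a f p : agree N f p -> agree N (fps_scale a f) (a%:P * p).
Proof. by move=> h i hi; rewrite coefCM -h. Qed.
Lemma agree_pow N f p k : agree N f p -> agree N (fps_pow f k) (p ^+ k).
Proof.
move=> h; elim: k => [|k IH]; first exact: agree_one.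
by rewrite exprS /fps_pow iterS; apply: agree_mul.
Qed.
Lemma agree_tr N f : agree N f (\poly_(i < N) f i).
Proof. by move=> i hi; rewrite coef_poly hi. Qed.

Lemma inv_coefs_size f n : size (inv_coefs f n) = n.+1.
Proof. by elim: n => [|n IH] //=; rewrite size_rcons IH. Qed.
Lemma nth_inv_coefs f n i : (i <= n)%N -> nth 0 (inv_coefs f n) i = fps_inv f i.
Proof.
elim: n => [|n IH]; first by rewrite leqn0 => /eqP ->.
rewrite leq_eqVlt => /orP [/eqP -> //| hi].
by rewrite /= nth_rcons inv_coefs_size hi IH.
Qed.
Lemma fps_inv_S f m : fps_inv f m.+1 =
  - (f 0%N)^-1 * \sum_(i < m.+1) f i.+1 * fps_inv f (m - i)%N.
Proof.
rewrite {1}/fps_inv /= nth_rcons inv_coefs_size ltnn eqxx; congr (_ * _).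
by apply: eq_bigr => i _; rewrite nth_inv_coefs // leq_subr.
Qed.
Lemma mul_inv f : f 0%N != 0 -> forall i, fps_mul f (fps_inv f) i = fps_one i.
Proof.
move=> h [|m]; first by rewrite /fps_mul big_ord1 /fps_inv /= mulfV.
rewrite /fps_mul big_ord_recl subn0 fps_inv_S /=.
rewrite (eq_bigr (fun i : 'I_m.+1 => f i.+1 * fps_inv f (m - i)%N)) //.
by rewrite mulrA mulrN mulfV // mulN1r addNr.
Qed.

Lemma aux1 (R : comNzRingType) (c a Y n : R) : (c - n * a) * Y + a * (Y * n) = c * Y.
Proof. ring. Qed.
Lemma aux2 (R : comNzRingType) (X Y c a n : R) : X + a * (Y * n) = c * Y -> X = (c - n * a) * Y.
Proof. move=> E; rewrite -[X](addrK (a * (Y * n))) E; ring. Qed.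
Lemma aux3 (R : comNzRingType) (q A B C D : R) : q * (A * B + C * D) = (q * A) * B + C * (q * D).
Proof. ring. Qed.
Lemma aux4 (R : comNzRingType) (c d E F : R) : (c * E) * F + E * (d * F) = (c + d) * (E * F).
Proof. ring. Qed.

Lemma fallS_l c a i : fall c a i.+1 = c * fall (c - a) a i.
Proof.
rewrite /fall big_ord_recl /= mul0r subr0; congr (_ * _).
apply: eq_bigr => j _; rewrite /bump /= mulrSr; ring.
Qed.
Lemma fallS_r c a i : fall c a i.+1 = fall c a i * (c - i%:R * a).
Proof. by rewrite /fall big_ord_recr. Qed.

Lemma fact_neq0 i : (i`!)%:R != 0 :> algC.
Proof. by rewrite pnatr_eq0 -lt0n fact_gt0. Qed.
Lemma natS_neq0 i : (i.+1)%:R != 0 :> algC.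
Proof. by rewrite pnatr_eq0. Qed.

Lemma ES_l a c i : E_ser a c i.+1 * i.+1%:R = c * E_ser a (c - a) i.
Proof.
rewrite /E_ser fallS_l factS natrM.
have h1 := fact_neq0 i; have h2 := natS_neq0 i.
by field; rewrite h1 nat1r h2.
Qed.
Lemma ES_r a c i : E_ser a c i.+1 * i.+1%:R = (c - i%:R * a) * E_ser a c i.
Proof.
rewrite /E_ser fallS_r factS natrM.
have h1 := fact_neq0 i; have h2 := natS_neq0 i.
by field; rewrite h1 nat1r h2.
Qed.
Lemma E0 a c : E_ser a c 0 = 1.
Proof. by rewrite /E_ser /fall big_ord0 divr1. Qed.

Definition e N a c : {poly algC} := \poly_(i < N) E_ser a c i.

Lemma e_deriv N a c : eqN N (e N.+1 a c)^`() (c%:P * e N.+1 a (c - a)).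
Proof.
move=> i hi; rewrite coef_deriv coefCM !coef_poly ltnS hi ltnS (ltnW hi).
by rewrite -(mulr_natr (E_ser a c i.+1)) ES_l.
Qed.

Lemma coef_q (a : algC) (r : {poly algC}) i : ((1 + a%:P * 'X) * r)`_i = r`_i + (if i is j.+1 then a * r`_j else 0).
Proof. by rewrite mulrDl mul1r coefD -mulrA coefCM coefXM; case: i => [|i] /=; rewrite ?mulr0. Qed.

Lemma e_ode N a c : eqN N ((1 + a%:P * 'X) * (e N.+1 a c)^`()) (c%:P * e N.+1 a c).
Proof.
move=> i hi; rewrite coef_q coefCM; case: i hi => [|j] hj.
  rewrite coef_deriv !coef_poly !ltnS hj leq0n -(mulr_natr (E_ser a c 1)) ES_r addr0.
  by rewrite mul0r subr0.
rewrite !coef_deriv !coef_poly !ltnS hj (ltnW hj).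
by rewrite -(mulr_natr (E_ser a c j.+2)) -(mulr_natr (E_ser a c j.+1)) (ES_r a c j.+1) aux1.
Qed.

Lemma ode_rec N (a c : algC) (r : {poly algC}) : eqN N ((1 + a%:P * 'X) * r^`()) (c%:P * r) ->
  forall i, (i < N)%N -> r`_i.+1 * i.+1%:R = (c - i%:R * a) * r`_i.
Proof.
move=> h i hi; have := h i hi; rewrite coef_q coefCM; case: i hi => [|j] hj.
  by rewrite coef_deriv addr0 -(mulr_natr r`_1) => ->; rewrite mul0r subr0.
rewrite !coef_deriv -(mulr_natr r`_j.+2) -(mulr_natr r`_j.+1) => E.
exact: aux2 E.
Qed.

Lemma ode_uniq N (a c : algC) (r s : {poly algC}) : r`_0 = s`_0 ->
  eqN N ((1 + a%:P * 'X) * r^`()) (c%:P * r) ->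
  eqN N ((1 + a%:P * 'X) * s^`()) (c%:P * s) -> eqN N.+1 r s.
Proof.
move=> h0 hr hs; elim=> [//|i IH] hi.
apply: (mulIf (natS_neq0 i)).
by rewrite (@ode_rec N a c r hr) // (@ode_rec N a c s hs) // IH // ltnW.
Qed.

Lemma e_mul N a c d : eqN N.+1 (e N.+1 a c * e N.+1 a d) (e N.+1 a (c + d)).
Proof.
apply: (@ode_uniq N a (c + d)).
- by rewrite coefM big_ord1 !coef_poly /= !E0 mulr1.
- rewrite derivM.
  have -> : (1 + a%:P * 'X) * ((e N.+1 a c)^`() * e N.+1 a d + e N.+1 a c * (e N.+1 a d)^`())
    = ((1 + a%:P * 'X) * (e N.+1 a c)^`()) * e N.+1 a d + e N.+1 a c * ((1 + a%:P * 'X) * (e N.+1 a d)^`()) by apply: aux3.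
  apply: eqN_trans.
    by apply: eqN_add; [apply: eqN_mul; [apply: e_ode|]|apply: eqN_mul; [|apply: e_ode]].
  by apply: eqN_eq; rewrite polyCD aux4.
- exact: e_ode.
Qed.

Arguments agree_mul {N f g p q}.
Arguments agree_add {N f g p q}.
Arguments agree_scale {N a f p}.
Arguments agree_pow {N f p}.
Arguments eqN_mul {N p q p' q'}.
Arguments eqN_add {N p q p' q'}.
Arguments eqN_trans {N p q r}.
Arguments eqN_le {N M p q}.
Arguments eqN_deriv {N p q}.
Arguments eqN_sym {N p q}.
Arguments eqN_mulC {N c p q}.
Lemma eqN_opp N p q : eqN N p q -> eqN N (- p) (- q).
Proof. by move=> h i hi; rewrite !coefN h. Qed.
Lemma eqN_muln N p q k : eqN N p q -> eqN N (p *+ k) (q *+ k).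
Proof. by move=> h i hi; rewrite !coefMn h. Qed.
Arguments eqN_opp {N p q}.
Lemma eqN_refl N p : eqN N p p. Proof. by []. Qed.
Arguments eqN_muln {N p q k}.
Lemma aux6 (R : comNzRingType) (P X B E : R) : P * (0 - (- X * (B * E)) * P) = X * B * (E * P ^+ 2).
Proof. ring. Qed.
Lemma aux8 (R : comNzRingType) (Pd P Bd Bp : R) : Pd * (Bp * P) = P * ((Bd * P + Bp * Pd) - Bd * P).
Proof. ring. Qed.
Lemma aux7 (R : comNzRingType) (E1 E2 P Pk X B : R) (k : nat) :
 E1 * (X*B*(E2*P^+2) * Pk *+ k.+1) = X * k.+1%:R * B * ((E1*E2) * (P*(P*Pk))).
Proof. ring. Qed.


Lemma aux9 (R : comNzRingType) (Y F A B c Q : R) k : Y *+ k.+1 = c * A + Q * B ->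
  (k.+1%:R * F) * Y = c * (F * A) + Q * (F * B).
Proof. move=> E; transitivity (F * (Y *+ k.+1)); [ring | rewrite E; ring]. Qed.

Section Main.
Variables (a b x : algC) (n : nat).
Let N := n.+2.
Let base : fps := fps_add fps_one
     (fps_scale (- x) (fps_add (E_ser a b) (fps_scale (-1) fps_one))).
Let P := fps_inv base.
Let p : {poly algC} := \poly_(i < N) P i.
Let bp : {poly algC} := 1 + (- x)%:P * (e N a b + (-1)%:P * 1).

Lemma agree_base : agree N base bp.
Proof.
apply: agree_add; first exact: agree_one.
apply: agree_scale; apply: agree_add; first exact: agree_tr.
by apply: agree_scale; apply: agree_one.
Qed.

Lemma T_coef k lam c : (k < N)%N ->
  T k lam x a b c = k`!%:R * (e N a c * p ^+ lam)`_k.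
Proof.
move=> hk; rewrite /T -/base -/P; congr (_ * _).
by apply: agree_mul hk; [apply: agree_tr | apply: agree_pow; apply: agree_tr].
Qed.

Lemma bp_p : eqN N (bp * p) 1.
Proof.
move=> i hi.
have h0 : base 0%N != 0.
  by rewrite /base /fps_add /fps_scale /fps_one E0 mulr1 addrN mulr0 addr0 oner_neq0.
rewrite -(agree_mul agree_base (agree_tr N P)) // mul_inv //.
exact: agree_one.
Qed.

Lemma bp_deriv : bp^`() = (- x)%:P * (e N a b)^`().
Proof. by rewrite /bp -polyC1 !derivE mulr0 addr0 add0r. Qed.


Lemma p_deriv : eqN n.+1 p^`() ((x * b)%:P * (e N a (b - a) * p ^+ 2)).
Proof.
have hD : eqN n.+1 (bp^`() * p + bp * p^`()) 0.
  by have := eqN_deriv bp_p; rewrite derivM -polyC1 derivC.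
have hE : eqN n.+1 bp^`() ((- x)%:P * (b%:P * e N a (b - a))).
  by rewrite bp_deriv; apply: eqN_mulC; exact: e_deriv.
have h1 : eqN n.+1 p^`() (p^`() * (bp * p)).
  rewrite -{1}[p^`()]mulr1; apply: eqN_mul => //.
  by apply: eqN_sym; apply: (eqN_le _ bp_p).
apply: (eqN_trans h1); rewrite (aux8 _ _ _ bp^`()).
apply: eqN_trans.
  apply: eqN_mul; first exact: eqN_refl.
  apply: eqN_add; first exact: hD.
  by apply: eqN_opp; apply: eqN_mul; first exact: hE.
by apply: eqN_eq; rewrite polyCN polyCM aux6.
Qed.

Lemma key lam c : eqN n.+1 ((e N a c * p ^+ lam)^`())
  (c%:P * (e N a (c - a) * p ^+ lam) + (x * lam%:R * b)%:P * (e N a (c + b - a) * p ^+ lam.+1)).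
Proof.
rewrite derivM deriv_exp.
apply: eqN_trans.
  apply: eqN_add.
    by apply: eqN_mul; first exact: e_deriv.
  apply: eqN_mul; first exact: eqN_refl.
  by apply: eqN_muln; apply: eqN_mul; first exact: p_deriv.
apply: eqN_add; first by apply: eqN_eq; rewrite mulrA.
case: lam => [|k].
  by apply: eqN_eq; rewrite mulr0n mulr0 mulr0 mul0r polyC0 mul0r.
rewrite /= !polyCM polyC_natr aux7 -exprS -exprS.
apply: eqN_mul; first exact: eqN_refl.
apply: eqN_mul; last exact: eqN_refl.
rewrite -addrA; exact: (eqN_le _ (e_mul n.+1 a c (b - a))).
Qed.

End Main.

Lemma main (a b c x : algC) (lam n : nat) :
  T n.+1 lam x a b c = c * T n lam x a b (c - a) + x * lam%:R * b * T n lam.+1 x a b (c + b - a).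
Proof.
rewrite !(T_coef a b x n) //.
have := key a b x n lam c n (ltnSn n).
rewrite coef_deriv coefD !coefCM => E.
by rewrite factS natrM; apply: aux9.
Qed.


Theorem theorem6 (alpha beta gamma lam x : nat) :
  (alpha, beta, gamma, x) <> (0%N, 0%N, 0%N, 0%N) ->
  forall n : nat,
    T n.+1 lam x%:R alpha%:R beta%:R gamma%:R =
      gamma%:R * T n lam x%:R alpha%:R beta%:R (gamma%:R - alpha%:R)
      + x%:R * lam%:R * beta%:R
        * T n lam.+1 x%:R alpha%:R beta%:R (gamma%:R + beta%:R - alpha%:R).
Proof. by move=> _ n; apply: main. Qed.
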